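(* Let $K$ be a field of characteristic zero, and let $F,\ell\in K[X]$ satisfy $\deg(F)=d>1=\deg(\ell)$. Suppose that, for infinitely many $n>0$, there is a degree-one $\ell_n\in K[X]$ such that $F^n=(F\circ\ell)^n\circ\ell_n$. Then either (1) $F^k=(F\circ\ell)^k$ for some $k\in\mathbb{N}$; or (2) $F=v^{-1}\circ\epsilon X^d\circ v$ and $\ell=v^{-1}\circ\delta X\circ v$ for some degree-one $v\in K[X]$ and some $\epsilon,\delta\in K^*$.
   Context: $F^n$ denotes the $n$-th iterate of $F$ under composition $\circ$; $v^{-1}$ is the compositional inverse of the degree-one polynomial $v$. *)

(* Defs.v *)
From HB Require Import structures.
From mathcomp Require Import all_boot all_order all_algebra.
Set Implicit Arguments. Unset Strict Implicit. Unset Printing Implicit Defensive.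
Import GRing.Theory.
Local Open Scope ring_scope.

Definition poly_iter (K : fieldType) (F : {poly K}) (n : nat) : {poly K} :=
  iter n (fun q => F \Po q) 'X.

Definition lin_inv (K : fieldType) (v : {poly K}) : {poly K} :=
  (lead_coef v)^-1 *: ('X - (v`_0)%:P).

(* Main.v *)
Require Import Defs.
From HB Require Import structures.
From mathcomp Require Import all_boot all_order all_algebra.
From mathcomp Require Import zify.
From Stdlib Require Import ClassicalEpsilon.
Set Implicit Arguments. Unset Strict Implicit. Unset Printing Implicit Defensive.
Import GRing.Theory.
Local Open Scope ring_scope.

Section Aux.
Variable K : fieldType.
Implicit Types p q r v w A B C D P Q S X Y nu mu eta beta F G l lam ln lm : {poly K}.

Lemma poly2E p : (size p <= 2)%N -> p = p`_1 *: 'X + (p`_0)%:P.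
Proof.
move=> sp; apply/polyP => i; rewrite coefD coefZ coefX coefC.
case: i => [|[|i]] /=; rewrite ?mulr0 ?mulr1 ?add0r ?addr0 //.
by rewrite nth_default // (leq_trans sp).
Qed.

Lemma lin_compE a b p : (a *: 'X + b%:P) \Po p = a *: p + b%:P.
Proof. by rewrite comp_polyD comp_polyZ comp_polyX comp_polyC. Qed.

Lemma lead2 p : size p = 2%N -> lead_coef p = p`_1.
Proof. by rewrite lead_coefE => ->. Qed.

Lemma lin1_neq0 p : size p = 2%N -> p`_1 != 0.
Proof. by move=> sp; rewrite -lead2 // lead_coef_eq0 -size_poly_eq0 sp. Qed.

Lemma lin_invK v : size v = 2%N -> lin_inv v \Po v = 'X.
Proof.
move=> sv; rewrite /lin_inv comp_polyZ comp_polyB comp_polyX comp_polyC lead2 //.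
 rewrite [v in v - _](poly2E (eq_leq sv)) addrK scalerA mulVf ?scale1r //.
by rewrite lin1_neq0.
Qed.

Lemma lin_Kinv v : size v = 2%N -> v \Po lin_inv v = 'X.
Proof.
move=> sv; rewrite [v in v \Po _](poly2E (eq_leq sv)) lin_compE /lin_inv lead2 //.
by rewrite scalerA mulfV ?lin1_neq0 // scale1r subrK.
Qed.

Lemma size_lin_inv v : size v = 2%N -> size (lin_inv v) = 2%N.
Proof.
move=> sv; rewrite /lin_inv size_scale ?size_XsubC // invr_eq0 lead2 //.
exact: lin1_neq0.
Qed.

Lemma size_compE p q : p != 0 -> (1 < size q)%N ->
  size (p \Po q) = ((size p).-1 * (size q).-1).+1.
Proof.
move=> p0 q1; rewrite -size_comp_poly polySpred //.
by rewrite comp_poly_eq0.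
Qed.

Lemma size_lin_comp v p : size v = 2%N -> (1 < size p)%N -> size (v \Po p) = size p.
Proof.
move=> sv sp; rewrite size_compE ?sv ?mul1n ?prednK //; first exact: ltnW.
by rewrite -size_poly_eq0 sv.
Qed.

Lemma comp_cancel p q r : (1 < size r)%N -> p \Po r = q \Po r -> p = q.
Proof.
move=> sr e; apply/eqP; rewrite -subr_eq0 -(comp_poly_eq0 _ sr) comp_polyB e.
by rewrite subrr.
Qed.

Lemma size_lin_lin v w : size v = 2%N -> size w = 2%N -> size (v \Po w) = 2%N.
Proof. by move=> sv sw; rewrite size_comp_poly2. Qed.


Lemma natf0 (k : nat) : [pchar K] =i pred0 -> (0 < k)%N -> k%:R != 0 :> K.
Proof. by move=> /pcharf0P -> ; rewrite -lt0n. Qed.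

Lemma size_expE p k : p != 0 -> size (p ^+ k) = ((size p).-1 * k).+1.
Proof.
by move=> p0; rewrite -size_exp polySpred // expf_neq0.
Qed.

Lemma size_low P n : size P = n.+2 ->
  leq (size (P - lead_coef P *: 'X^(n.+1))) n.+1.
Proof.
move=> sP; apply/leq_sizeP => j hj; rewrite coefB coefZ coefXn.
case: (ltngtP j n.+1) => [|hj2|hj2]; first by rewrite ltnNge hj.
  by rewrite mulr0 subr0 nth_default // sP.
by rewrite hj2 mulr1 lead_coefE sP subrr.
Qed.

Lemma size_gt_coef P i : P`_i != 0 -> (i < size P)%N.
Proof. by apply: contraR; rewrite -leqNgt => /leq_sizeP ->. Qed.

Lemma size_comp_le X Y a b : leq (size X) a.+1 -> size Y = b.+2 ->
  leq (size (X \Po Y)) (a * b.+1).+1.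
Proof.
move=> sX sY; apply: (leq_trans (size_comp_poly_leq _ _)).
rewrite sY ltnS leq_mul2r /=.
by move: sX; case: (size X).
Qed.

Lemma U0 A B C D n m : [pchar K] =i pred0 ->
  size A = n.+2 -> size B = n.+2 -> size C = m.+2 -> size D = m.+2 ->
  lead_coef C = lead_coef D -> A \Po C = B \Po D -> leq (size (C - D)) 1.
Proof.
move=> ch sA sB sC sD lCD e.
have C0 : C != 0 by rewrite -size_poly_eq0 sC.
have D0 : D != 0 by rewrite -size_poly_eq0 sD.
set g := lead_coef C.
have g0 : g != 0 by rewrite lead_coef_eq0.
have lAB : lead_coef A = lead_coef B.
  have := congr1 lead_coef e; rewrite !lead_coef_comp ?sC ?sD // sA sB -lCD.
  by move/mulIf; apply; rewrite expf_neq0.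
set a := lead_coef A.
have a0 : a != 0 by rewrite lead_coef_eq0 -size_poly_eq0 sA.
set A1 := A - a *: 'X^(n.+1).
set B1 := B - a *: 'X^(n.+1).
have sA1 : (size A1 <= n.+1)%N by exact: size_low.
have sB1 : (size B1 <= n.+1)%N by rewrite /B1 /a lAB; exact: size_low.
have eA : A = a *: 'X^(n.+1) + A1 by rewrite addrC subrK.
have eB : B = a *: 'X^(n.+1) + B1 by rewrite addrC subrK.
have key : a *: (C ^+ n.+1 - D ^+ n.+1) = (B1 \Po D) - (A1 \Po C).
  have e2 : ((a *: 'X^(n.+1)) \Po C) + (A1 \Po C) = ((a *: 'X^(n.+1)) \Po D) + (B1 \Po D).
    by rewrite -!comp_polyD -eA -eB.
  move: e2; rewrite !comp_polyZ !comp_Xn_poly => e2.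
  rewrite scalerBr (_ : a *: C ^+ n.+1 = a *: D ^+ n.+1 + (B1 \Po D) - (A1 \Po C)).
    by rewrite addrAC [_ + (B1 \Po D)]addrC addrK.
  by rewrite -e2 addrK.
have sE : leq (size ((B1 \Po D) - (A1 \Po C))) (n * m.+1).+1.
  rewrite (leq_trans (size_polyD _ _)) // size_polyN geq_max.
  by rewrite !size_comp_le.
move: key; rewrite subrXX => key.
set S := \sum_(i < n.+1) _ in key.
have cS : S`_(n * m.+1) = g ^+ n *+ n.+1.
  rewrite /S coef_sum -[n.+1 in RHS]card_ord -sumr_const; apply: eq_bigr => i _.
  have hi : (i <= n)%N by rewrite -ltnS.
  have ss : size (C ^+ (n.+1.-1 - i) * D ^+ i) = (n * m.+1).+1.
    rewrite size_mul ?expf_neq0 // !size_expE // sC sD /=.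
    by rewrite addnS -mulnDr subnK // mulnC.
  have := lead_coefE (C ^+ (n.+1.-1 - i) * D ^+ i); rewrite ss /= => <-.
  by rewrite lead_coefM !lead_coef_exp -lCD -exprD /= subnK.
have S0 : (n * m.+1 < size S)%N.
  apply: size_gt_coef; rewrite cS -mulr_natr mulf_neq0 ?expf_neq0 //.
  exact: natf0.
have [CD0|CD0] := eqVneq (C - D) 0; first by rewrite CD0 size_poly0.
have SS : S != 0 by rewrite -size_poly_gt0 (leq_ltn_trans _ S0).
have := sE; rewrite -key size_scale // size_mul //.
move: S0; set s1 := size S; set s2 := size (C - D); lia.
Qed.


Lemma size_scaleX c : c != 0 -> size (c *: 'X : {poly K}) = 2%N.
Proof. by move=> c0; rewrite size_scale // size_polyX. Qed.

Lemma U A B C D : [pchar K] =i pred0 -> (1 < size A)%N -> size A = size B ->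
  (1 < size C)%N -> size C = size D -> A \Po C = B \Po D ->
  exists mu : {poly K}, size mu = 2%N /\ D = mu \Po C /\ A = B \Po mu.
Proof.
move=> ch hA sAB hC sCD e.
have sA : size A = (size A).-2.+2 by case: (size A) hA => [|[|k]].
have sC : size C = (size C).-2.+2 by case: (size C) hC => [|[|k]].
have D0 : D != 0 by rewrite -size_poly_eq0 -sCD sC.
have C0 : C != 0 by rewrite -size_poly_eq0 sC.
set r := lead_coef C / lead_coef D.
have r0 : r != 0 by rewrite mulf_neq0 ?invr_eq0 ?lead_coef_eq0.
have e2 : A \Po C = (B \Po (r^-1 *: 'X)) \Po (r *: D).
  by rewrite -comp_polyA comp_polyZ comp_polyX scalerA mulVf // scale1r.
have := U0 ch sA _ sC _ _ e2.
rewrite size_comp_poly2 ?size_scaleX ?invr_eq0 // -sAB size_scale // -sCD.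
rewrite lead_coefZ /r divfK ?lead_coef_eq0 // => /(_ sA sC erefl) /size1_polyC hCD.
set E := (C - r *: D)`_0 in hCD.
have eD : D = ((r^-1 *: 'X) \Po ('X - E%:P)) \Po C.
  rewrite -comp_polyA comp_polyB comp_polyX comp_polyC -hCD opprB addrC subrK.
  by rewrite comp_polyZ comp_polyX scalerA mulVf // scale1r.
exists ((r^-1 *: 'X) \Po ('X - E%:P)); split.
  by rewrite size_comp_poly2 ?size_XsubC // size_scaleX // invr_eq0.
split => //; apply: (comp_cancel hC); by rewrite e {1}eD comp_polyA.
Qed.


Lemma DC P v k : size v = 2%N -> (P \Po v)^`(k) = (v`_1 ^+ k) *: (P^`(k) \Po v).
Proof.
move=> sv; have dv : v^`() = (v`_1)%:P.
  rewrite [v in LHS](poly2E (eq_leq sv)) derivD derivZ derivX derivC addr0.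
  by rewrite alg_polyC.
elim: k => [|k IH]; first by rewrite expr0 scale1r !derivn0.
rewrite derivnS IH derivZ deriv_comp dv mulrC mul_polyC scalerA -exprSr.
by rewrite -derivnS.
Qed.

Lemma Mlem (al be ga : K) (eta : {poly K}) d : [pchar K] =i pred0 -> size eta = 2%N ->
  ga != 0 -> (1 < d)%N -> al *: 'X^d + be%:P = ga *: eta ^+ d ->
  eta`_0 = 0 /\ be = 0.
Proof.
move=> ch se g0 d1 E.
have e1 : eta`_1 != 0 by exact: lin1_neq0.
have h := congr1 (fun p => p^`().[0]) E; move: h => /=.
rewrite derivD derivZ derivXn derivC addr0 derivZ deriv_exp.
rewrite !hornerZ !hornerMn hornerXn hornerM horner_exp !horner_coef0 coef_deriv mulr1n expr0n.
have -> : (d.-1 == 0%N) = false by case: (d) d1 => [|[|]].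
rewrite mul0rn mulr0 => /esym/eqP; rewrite -mulr_natr !mulf_eq0 (negbTE g0).
rewrite (negbTE e1) (negbTE (natf0 ch (ltnW d1))) orbF /= expf_eq0 => /andP [_ /eqP e0].
split => //; have := congr1 (fun p => p.[0]) E => /=.
rewrite !hornerE horner_coef0 e0 expr0n; case: d d1 E => // d' _ _.
by rewrite mulr0 add0r => ->; rewrite mulr0.
Qed.


Lemma derQ P d : [pchar K] =i pred0 -> size P = d.+1 -> (0 < d)%N ->
  leq (size (P^`(d.-1))) 2 /\ (P^`(d.-1))`_1 != 0.
Proof.
move=> ch sP d0; split.
  apply/leq_sizeP => j hj; rewrite coef_derivn nth_default ?mul0rn // sP.
  by move: hj d0; case: (d) => // d'; lia.
rewrite coef_derivn addn1 prednK // -mulr_natr mulf_neq0 //.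
  by rewrite -[d in P`_d]/(d.+1.-1) -sP -lead_coefE lead_coef_eq0 -size_poly_eq0 sP.
by apply: natf0; rewrite // ffact_gt0 leq_pred.
Qed.

Lemma Bfix P v nu d : [pchar K] =i pred0 -> size P = d.+1 -> (1 < d)%N ->
  (P^`(d.-1)).[0] = 0 -> size v = 2%N -> size nu = 2%N ->
  nu \Po (P \Po v) = P -> v`_0 = 0.
Proof.
move=> ch sP d1 c0 sv snu E.
have [sQ Q1] := derQ ch sP (ltnW d1).
have := congr1 (fun p => (p^`(d.-1)).[0]) E => /=.
rewrite [nu](poly2E (eq_leq snu)) lin_compE derivnD derivnZ derivnC.
have -> : (d.-1 == 0%N) = false by case: (d) d1 => [|[|]].
rewrite addr0 DC // c0 !hornerZ horner_comp horner_coef0 => /eqP.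
rewrite !mulf_eq0 (negbTE (lin1_neq0 snu)) expf_eq0 (negbTE (lin1_neq0 sv)) andbF /=.
rewrite [P^`(d.-1)](poly2E sQ) hornerD hornerZ hornerX hornerC -horner_coef0 c0.
by rewrite addr0 mulf_eq0 (negbTE Q1) /= => /eqP.
Qed.


Lemma coef_compZX P (u : K) i : (P \Po (u *: 'X))`_i = u ^+ i * P`_i.
Proof.
elim/poly_ind: P i => [|Q c IH] i; first by rewrite comp_poly0 !coef0 mulr0.
rewrite comp_poly_MXaddC -scalerAr !coefD !coefC coefZ !coefMX.
case: i => [|i] /=; first by rewrite mulr0 !add0r expr0 mul1r.
by rewrite !addr0 IH exprS mulrA.
Qed.


Lemma piterS F n : poly_iter F n.+1 = F \Po poly_iter F n.
Proof. by []. Qed.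

Lemma piter0 F : poly_iter F 0 = 'X.
Proof. by []. Qed.

Lemma piterD F a b : poly_iter F (a + b) = poly_iter F a \Po poly_iter F b.
Proof.
elim: a => [|a IH]; first by rewrite add0n piter0 comp_polyX.
by rewrite addSn !piterS IH comp_polyA.
Qed.

Lemma size_piter F d n : size F = d.+1 -> (0 < d)%N ->
  size (poly_iter F n) = (d ^ n).+1.
Proof.
move=> sF d0; elim: n => [|n IH]; first by rewrite piter0 size_polyX.
rewrite piterS size_compE ?IH ?sF ?expnS //; first by rewrite -size_poly_eq0 sF.
by rewrite ltnS expn_gt0 d0.
Qed.

Definition cj v p := v \Po (p \Po lin_inv v).

Lemma cjM v p q : size v = 2%N -> cj v (p \Po q) = cj v p \Po cj v q.
Proof.
move=> sv; rewrite /cj !comp_polyA -[((v \Po p) \Po lin_inv v) \Po v]comp_polyA.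
by rewrite lin_invK // comp_polyXr.
Qed.

Lemma cjX v : size v = 2%N -> cj v 'X = 'X.
Proof. by move=> sv; rewrite /cj comp_polyX lin_Kinv. Qed.

Lemma cj_iter v F n : size v = 2%N -> poly_iter (cj v F) n = cj v (poly_iter F n).
Proof.
move=> sv; elim: n => [|n IH]; first by rewrite !piter0 cjX.
by rewrite !piterS IH cjM.
Qed.

Lemma uncj v p : size v = 2%N -> lin_inv v \Po (cj v p \Po v) = p.
Proof.
move=> sv; rewrite /cj !comp_polyA lin_invK // comp_polyX -comp_polyA lin_invK //.
by rewrite comp_polyXr.
Qed.

Lemma size_cj v p : size v = 2%N -> (1 < size p)%N -> size (cj v p) = size p.
Proof.
move=> sv sp; rewrite /cj size_lin_comp ?size_comp_poly2 ?size_lin_inv //.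
Qed.


Lemma size_gt1 F d n : size F = d.+1 -> (0 < d)%N -> (1 < size (poly_iter F n))%N.
Proof. by move=> sF d0; rewrite (size_piter _ sF d0) ltnS expn_gt0 d0. Qed.

Lemma K1 F l d n lam : [pchar K] =i pred0 -> size F = d.+1 -> (1 < d)%N ->
  size l = 2%N -> (1 < n)%N -> size lam = 2%N ->
  poly_iter F n = poly_iter (F \Po l) n \Po lam ->
  exists mu, size mu = 2%N /\ poly_iter (F \Po l) 2 \Po lam = mu \Po poly_iter F 2.
Proof.
move=> ch sF d1 sl n1 slam E.
have d0 : (0 < d)%N by exact: ltnW.
have sG : size (F \Po l) = d.+1 by rewrite size_comp_poly2.
have en : n = ((n - 2) + 2)%N by rewrite subnK.
move: E; rewrite en !piterD -comp_polyA => E.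
have [mu [smu [e1 _]]] := U ch (size_gt1 _ sF d0) (etrans (size_piter _ sF d0)
  (esym (size_piter _ sG d0))) (size_gt1 _ sF d0)
  (etrans (size_piter _ sF d0) (etrans (esym (size_piter _ sG d0))
  (esym (size_comp_poly2 _ slam)))) E.
by exists mu.
Qed.


Lemma K3 F l d m n lam : size F = d.+1 -> (0 < d)%N -> size l = 2%N ->
  size lam = 2%N -> (m < n)%N ->
  poly_iter F m = poly_iter (F \Po l) m \Po lam ->
  poly_iter F n = poly_iter (F \Po l) n \Po lam ->
  poly_iter F (n - m) = poly_iter (F \Po l) (n - m).
Proof.
move=> sF d0 sl slam mn Em En.
have sG : size (F \Po l) = d.+1 by rewrite size_comp_poly2.
have en : n = ((n - m) + m)%N by rewrite subnK // ltnW.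
rewrite en !piterD Em -comp_polyA in En.
apply: (comp_cancel _ En); rewrite size_comp_poly2 //; exact: size_gt1 sG d0.
Qed.

Lemma K4 F l d n lam (c : K) : [pchar K] =i pred0 -> F = c *: 'X^d -> c != 0 ->
  (1 < d)%N -> size l = 2%N -> (1 < n)%N -> size lam = 2%N ->
  poly_iter F n = poly_iter (F \Po l) n \Po lam -> l`_0 = 0.
Proof.
move=> ch eF c0 d1 sl n1 slam.
have [n' ->] : exists n', n = n'.+2 by exists (n - 2)%N; rewrite -addn2 subnK.
move=> E.
have d0 : (0 < d)%N by exact: ltnW.
have sF : size F = d.+1 by rewrite eF size_scale // size_polyXn.
set G := F \Po l.
have sG : size G = d.+1 by rewrite size_comp_poly2.
set R := poly_iter G n' \Po lam.
have sR : size R = (d ^ n').+1 by rewrite size_comp_poly2 // (size_piter _ sG d0).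
move: E; rewrite !piterS -/R => E.
have E2 : F \Po (F \Po poly_iter F n') = F \Po (l \Po (G \Po R)).
  by rewrite E /R /G !comp_polyA.
have sC : size (F \Po poly_iter F n') = (d ^ n'.+1).+1.
  by rewrite -piterS (size_piter _ sF d0).
have sD : size (l \Po (G \Po R)) = (d ^ n'.+1).+1.
  rewrite size_lin_comp // /R comp_polyA -piterS size_comp_poly2 // (size_piter _ sG d0) //.
  by rewrite ltnS expn_gt0 d0.
have h1 : (1 < size (F \Po poly_iter F n'))%N by rewrite sC ltnS expn_gt0 d0.
have hF : (1 < size F)%N by rewrite sF ltnS.
have [sig [ssig [e1 e2]]] := U ch hF erefl h1 (etrans sC (esym sD)) E2.
have s0 : sig`_0 = 0.
  have := e2; rewrite eF comp_polyZ comp_Xn_poly -[c *: 'X^d]addr0.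
  by rewrite -polyC0 => /(Mlem ch ssig c0 d1) [].
have E3 : (l \Po G) \Po R = (sig \Po F) \Po poly_iter F n'.
  by rewrite -[(sig \Po F) \Po _]comp_polyA -e1 [RHS]comp_polyA.
have sLG : size (l \Po G) = d.+1 by rewrite size_lin_comp // sG.
have sSF : size (sig \Po F) = d.+1 by rewrite size_lin_comp // sF.
have hR : (1 < size R)%N by rewrite sR ltnS expn_gt0 d0.
have hLG : (1 < size (l \Po G))%N by rewrite sLG.
have [mu [smu [_ e3]]] := U ch hLG (etrans sLG (esym sSF)) hR
  (etrans sR (esym (size_piter _ sF d0))) E3.
set eta := mu \Po lin_inv l.
have seta : size eta = 2%N by rewrite size_lin_lin // size_lin_inv.
have E4 : l \Po F = (sig \Po F) \Po eta.
  rewrite /eta comp_polyA -e3 /G -comp_polyA -comp_polyA lin_Kinv // comp_polyXr.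
  by [].
move: E4; rewrite [l in l \Po F](poly2E (eq_leq sl)) [sig](poly2E (eq_leq ssig)) s0.
rewrite !lin_compE comp_polyD comp_polyC comp_polyZ eF comp_polyZ comp_Xn_poly.
rewrite !scalerA addr0 => /(Mlem ch seta _ d1) [] //.
by rewrite mulf_neq0 // lin1_neq0.
Qed.


Lemma piter2 F : poly_iter F 2 = F \Po F.
Proof. by rewrite !piterS piter0 comp_polyXr. Qed.

Lemma K2 F l d i0 n m ln lm : [pchar K] =i pred0 -> size F = d.+1 -> (1 < d)%N ->
  size l = 2%N -> (F^`(d.-1)).[0] = 0 -> (i0 < d)%N -> F`_i0 != 0 ->
  (1 < n)%N -> (1 < m)%N -> size ln = 2%N -> size lm = 2%N ->
  poly_iter F n = poly_iter (F \Po l) n \Po ln ->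
  poly_iter F m = poly_iter (F \Po l) m \Po lm ->
  (lin_inv ln \Po lm) = (lin_inv ln \Po lm)`_1 *: 'X /\
  ((lin_inv ln \Po lm)`_1) ^+ (d - i0) = 1.
Proof.
move=> ch sF d1 sl c0 i0d Fi0 n1 m1 sln slm En Em.
have [mun [smun en]] := K1 ch sF d1 sl n1 sln En.
have [mum [smum em]] := K1 ch sF d1 sl m1 slm Em.
set beta := lin_inv ln \Po lm.
have sbeta : size beta = 2%N by rewrite size_lin_lin // size_lin_inv.
set rho := lin_inv mun \Po mum.
have srho : size rho = 2%N by rewrite size_lin_lin // size_lin_inv.
have lmE : lm = ln \Po beta by rewrite /beta comp_polyA lin_Kinv // comp_polyX.
have E1 : poly_iter F 2 \Po beta = rho \Po poly_iter F 2.
  move: en em; set P2 := poly_iter F 2; set Q2 := poly_iter (F \Po l) 2 => en em.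
  by rewrite /rho -[RHS]comp_polyA -em lmE [X in lin_inv mun \Po X]comp_polyA en -[X in lin_inv mun \Po X]comp_polyA [RHS]comp_polyA lin_invK // comp_polyX.
rewrite !piter2 in E1.
have E2 : F \Po (F \Po beta) = (rho \Po F) \Po F by rewrite comp_polyA E1 comp_polyA.
have hF : (1 < size F)%N by rewrite sF ltnS ltnW.
have sFb : size (F \Po beta) = size F by rewrite size_comp_poly2.
have sRF : size F = size (rho \Po F) by rewrite size_lin_comp.
have hFb : (1 < size (F \Po beta))%N by rewrite sFb.
have [nu [snu [e1 e2]]] := U ch hF sRF hFb sFb E2.
have b0 : beta`_0 = 0 by apply: (Bfix ch sF d1 c0 sbeta snu); rewrite -e1.
have n0 : nu`_0 = 0 by apply: (Bfix ch sF d1 c0 snu srho); rewrite comp_polyA -e2.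
have bE : beta = beta`_1 *: 'X by rewrite {1}(poly2E (eq_leq sbeta)) b0 addr0.
split => //.
set b1 := beta`_1 in bE *.
have nE : nu = nu`_1 *: 'X by rewrite {1}(poly2E (eq_leq snu)) n0 addr0.
set n1' := nu`_1 in nE.
have hc i : F`_i = n1' * (b1 ^+ i * F`_i).
  by rewrite {1}e1 nE bE comp_polyZ comp_polyX coefZ coef_compZX.
have Fd : F`_d != 0.
  by rewrite -[d in F`_d]/(d.+1.-1) -sF -lead_coefE lead_coef_eq0 -size_poly_eq0 sF.
have h1 : n1' * b1 ^+ d = 1 by apply: (mulIf Fd); rewrite mul1r -mulrA -hc.
have h2 : n1' * b1 ^+ i0 = 1 by apply: (mulIf Fi0); rewrite mul1r -mulrA -hc.
apply: (mulfI (_ : n1' * b1 ^+ i0 != 0)); first by rewrite h2 oner_neq0.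
by rewrite mulr1 -mulrA -exprD subnKC ?h1 ?h2 // ltnW.
Qed.


Lemma main_c F l d : [pchar K] =i pred0 -> size F = d.+1 -> (1 < d)%N ->
  size l = 2%N -> (F^`(d.-1)).[0] = 0 ->
  (forall N : nat, exists n : nat, (N < n)%N /\
     exists ln : {poly K}, size ln = 2%N /\
       poly_iter F n = poly_iter (F \Po l) n \Po ln) ->
  (exists k : nat, (0 < k)%N /\ poly_iter F k = poly_iter (F \Po l) k) \/
  (exists c a : K, [/\ c != 0, a != 0, F = c *: 'X^d & l = a *: 'X]).
Proof.
move=> ch sF d1 sl c0 H.
have d0 : (0 < d)%N by exact: ltnW.
have H1 N : {n : nat | (N < n)%N /\ exists ln : {poly K}, size ln = 2%N /\
       poly_iter F n = poly_iter (F \Po l) n \Po ln}.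
  by apply: constructive_indefinite_description; exact: H.
pose nx N := sval (H1 N).
have H2 N : {ln : {poly K} | size ln = 2%N /\
       poly_iter F (nx N) = poly_iter (F \Po l) (nx N) \Po ln}.
  by apply: constructive_indefinite_description; exact: (proj2 (svalP (H1 N))).
have nxP N : (N < nx N)%N by exact: (proj1 (svalP (H1 N))).
pose idx j := nx (iter j nx 1%N).
pose Lam j := sval (H2 (iter j nx 1%N)).
have it1 j : (1 <= iter j nx 1%N)%N.
  elim: j => [|j IH] //; rewrite iterS; exact: (leq_trans IH (ltnW (nxP _))).
have idx1 j : (1 < idx j)%N by apply: (leq_ltn_trans (it1 j)); exact: nxP.
have idxS j : (idx j < idx j.+1)%N by exact: nxP.
have idxM : {homo idx : i j / (i < j)%N}.
  by apply: homo_ltn => //; exact: ltn_trans.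
have sLam j : size (Lam j) = 2%N by exact: (proj1 (svalP (H2 _))).
have ELam j : poly_iter F (idx j) = poly_iter (F \Po l) (idx j) \Po Lam j.
  exact: (proj2 (svalP (H2 _))).
have [/existsP [i0 Fi0]|/existsP nex] := boolP [exists i : 'I_d, F`_i != 0].
  left.
  set k := (d - i0)%N.
  have k0 : (0 < k)%N by rewrite subn_gt0.
  have hK2 j := K2 ch sF d1 sl c0 (ltn_ord i0) Fi0 (idx1 0%N) (idx1 j)
    (sLam 0%N) (sLam j) (ELam 0%N) (ELam j).
  pose uu j := (lin_inv (Lam 0%N) \Po Lam j)`_1.
  have LamE j : Lam j = Lam 0%N \Po (uu j *: 'X).
    by rewrite -(hK2 j).1 comp_polyA lin_Kinv // comp_polyX.
  set s := map uu (iota 0 k.+1).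
  have : ~~ uniq s.
    apply/negP => Us.
    have hall : all k.-unity_root s.
      apply/allP => x /mapP [j _ ->]; rewrite unity_rootE; apply/eqP.
      exact: (hK2 j).2.
    by have := max_unity_roots k0 hall Us; rewrite size_map size_iota ltnn.
  move/(uniqPn 0) => [i [j [ij js eqij]]].
  rewrite size_map size_iota in js.
  rewrite !(nth_map 0%N) ?size_iota ?(ltn_trans ij) // !nth_iota ?(ltn_trans ij) //
    !add0n in eqij.
  have LL : Lam i = Lam j by rewrite LamE (LamE j) eqij.
  exists (idx j - idx i)%N; split; first by rewrite subn_gt0 idxM.
  apply: (K3 sF d0 sl (sLam i) (idxM _ _ ij) (ELam i)).
  by rewrite LL ELam.
right.
have Fd : F`_d != 0.
  by rewrite -[d in F`_d]/(d.+1.-1) -sF -lead_coefE lead_coef_eq0 -size_poly_eq0 sF.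
have FE : F = F`_d *: 'X^d.
  apply/polyP => i; rewrite coefZ coefXn.
  case: (ltngtP i d) => [hi|hi|<-]; last by rewrite mulr1.
    rewrite mulr0; apply/eqP/negPn/negP => Fi; apply: nex.
    by exists (Ordinal hi).
  by rewrite mulr0 nth_default // sF.
have l0 := K4 ch FE Fd d1 sl (idx1 0%N) (sLam 0%N) (ELam 0%N).
exists F`_d, l`_1; split => //; first exact: lin1_neq0.
by rewrite {1}(poly2E (eq_leq sl)) l0 addr0.
Qed.
End Aux.

Theorem proposition3p3 (K : fieldType) (F l : {poly K}) (d : nat) :
  [pchar K] =i pred0 ->
  size F = d.+1 -> (1 < d)%N -> size l = 2%N ->
  (forall N : nat, exists n : nat, (N < n)%N /\
     exists ln : {poly K}, size ln = 2%N /\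
       poly_iter F n = poly_iter (F \Po l) n \Po ln) ->
  (exists k : nat, (0 < k)%N /\ poly_iter F k = poly_iter (F \Po l) k)
  \/
  (exists (v : {poly K}) (eps delta : K),
     [/\ size v = 2%N, eps != 0, delta != 0,
         F = lin_inv v \Po ((eps *: 'X^d) \Po v) &
         l = lin_inv v \Po ((delta *: 'X) \Po v)]).
Proof.
move=> ch sF d1 sl H.
have d0 : (0 < d)%N by exact: ltnW.
have [sQ Q1] := derQ ch sF d0.
set Q0 := F^`(d.-1) in sQ Q1.
set z := - Q0`_0 / Q0`_1.
have Qz : Q0.[z] = 0.
  by rewrite [Q0](poly2E sQ) hornerD hornerZ hornerX hornerC /z mulrC divfK // addNr.
set v : {poly K} := 'X - z%:P.
have sv : size v = 2%N by rewrite size_XsubC.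
have w0 : (lin_inv v).[0] = z.
  rewrite horner_coef0 /lin_inv coefZ coefB coefX coefC /= sub0r.
  by rewrite /v lead_coefXsubC invr1 mul1r coefB coefX coefC /= sub0r opprK.
have hF1 : (1 < size F)%N by rewrite sF ltnS.
have hl1 : (1 < size l)%N by rewrite sl.
have sF' : size (cj v F) = d.+1 by rewrite size_cj.
have sl' : size (cj v l) = 2%N by rewrite size_cj.
have c0 : ((cj v F)^`(d.-1)).[0] = 0.
  rewrite /cj /v comp_polyB comp_polyX comp_polyC derivnB derivnC.
  have -> : (d.-1 == 0%N) = false by case: (d) d1 => [|[|]].
  rewrite subr0 DC ?size_lin_inv // hornerZ horner_comp -/v w0 -/Q0 Qz.
  by rewrite mulr0.
have H' : forall N : nat, exists n : nat, (N < n)%N /\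
     exists ln : {poly K}, size ln = 2%N /\
       poly_iter (cj v F) n = poly_iter (cj v F \Po cj v l) n \Po ln.
  move=> N; have [n [Nn [ln [sln E]]]] := H N.
  exists n; split => //; exists (cj v ln); split; first by rewrite size_cj // sln.
  by rewrite -cjM // !cj_iter // E cjM.
have [[k [k0 Ek]]|[c [a [cn0 an0 FE lE]]]] := main_c ch sF' d1 sl' c0 H'.
  left; exists k; split => //.
  move: Ek; rewrite -cjM // !cj_iter // => Ek.
  by rewrite -[poly_iter F k](uncj (poly_iter F k) sv) Ek uncj.
right; exists v, c, a; split => //.
  by rewrite -FE uncj.
by rewrite -lE uncj.
Qed.
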